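(* Let $m, n_0, n_1$ be positive integers and $n(\lambda) = n_0 + n_1\lambda$. Suppose nonzero polynomials $x(\lambda), y(\lambda), z(\lambda) \in \mathbb{Q}[\lambda]$ satisfy $$\frac{m}{n(\lambda)} = \frac{1}{x(\lambda)} + \frac{1}{y(\lambda)} + \frac{1}{z(\lambda)}$$ identically, where $z(\lambda) = z_0 + z_1\lambda$ with $z_1 \neq 0$, and both $x$ and $y$ have degree larger than $1$. Then $z_1 = n_1/m$.
   Context: $\lambda$ is an indeterminate; the equation is an identity of rational functions in $\lambda$. *)

(* Defs.v *)
From mathcomp Require Import all_boot all_order all_algebra.
From mathcomp Require Import fraction.
Set Implicit Arguments. Unset Strict Implicit. Unset Printing Implicit Defensive.
Import GRing.Theory.
Local Open Scope ring_scope.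

Notation ratfun := {fraction {poly rat}}.
Definition rf (p : {poly rat}) : ratfun := @FracField.tofrac _ p.

(* Main.v *)
Require Import Defs.
From mathcomp Require Import all_boot all_order all_algebra.
From mathcomp Require Import fraction.
From mathcomp Require Import ring lra zify.
Import GRing.Theory.
Local Open Scope ring_scope.

Lemma size_lin (a b : rat) : b != 0 -> size (a%:P + b *: 'X) = 2%N.
Proof.
move=> hb; rewrite addrC -mul_polyC size_MXaddC polyC_eq0 (negbTE hb) /=.
by rewrite size_polyC hb.
Qed.

Lemma fld_aux (F : fieldType) (a n x y z : F) :
  n != 0 -> x != 0 -> y != 0 -> z != 0 ->
  a / n = x^-1 + y^-1 + z^-1 -> a * x * y * z = n * (y * z + x * z + x * y).
Proof.
move=> n0 x0 y0 z0 H; rewrite -[a](divfK n0) H; field.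
by rewrite x0 y0 z0.
Qed.

Lemma ring_aux (R : comNzRingType) (a n x y z : R) :
  a * x * y * z = n * (y * z + x * z + x * y) -> (a * z - n) * (x * y) = n * z * (x + y).
Proof. move=> H; apply/eqP; rewrite -subr_eq0 -(subrr (a * x * y * z)) {2}H; apply/eqP; ring. Qed.

Lemma main_aux (M N Z x y : {poly rat}) : N != 0 -> Z != 0 -> x != 0 -> y != 0 ->
  rf M / rf N = (rf x)^-1 + (rf y)^-1 + (rf Z)^-1 ->
  (M * Z - N) * (x * y) = N * Z * (x + y).
Proof.
move=> N0 Z0 x0 y0 H; apply: ring_aux.
have aN0 : rf N != 0 by rewrite /rf tofrac_eq0.
have aZ0 : rf Z != 0 by rewrite /rf tofrac_eq0.
have ax0 : rf x != 0 by rewrite /rf tofrac_eq0.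
have ay0 : rf y != 0 by rewrite /rf tofrac_eq0.
have E := @fld_aux _ _ _ _ _ _ aN0 ax0 ay0 aZ0 H.
apply/eqP; rewrite -tofrac_eq; apply/eqP.
by rewrite !rmorphM !rmorphD /= !rmorphM.
Qed.

Theorem lemma3 (m n0 n1 : nat) (x y : {poly rat}) (z0 z1 : rat) :
  (0 < m)%N -> (0 < n0)%N -> (0 < n1)%N ->
  x != 0 -> y != 0 -> z1 != 0 ->
  (1 < (size x).-1)%N -> (1 < (size y).-1)%N ->
  rf (m%:R%:P) / rf (n0%:R%:P + n1%:R *: 'X)
    = (rf x)^-1 + (rf y)^-1 + (rf (z0%:P + z1 *: 'X))^-1 ->
  z1 = n1%:R / m%:R.
Proof.
move=> hm hn0 hn1 hx hy hz sx sy H.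
have hn1' : (n1%:R : rat) != 0 by rewrite Num.Theory.pnatr_eq0 -lt0n.
have hm' : (m%:R : rat) != 0 by rewrite Num.Theory.pnatr_eq0 -lt0n.
have sN : size ((n0%:R : rat)%:P + (n1%:R : rat) *: 'X) = 2%N by apply: size_lin.
have sZ : size (z0%:P + z1 *: 'X) = 2%N by apply: size_lin.
have N0 : ((n0%:R : rat)%:P + (n1%:R : rat) *: 'X) != 0 by rewrite -size_poly_eq0 sN.
have Z0 : (z0%:P + z1 *: 'X) != 0 by rewrite -size_poly_eq0 sZ.
have E2 := @main_aux _ _ _ _ _ N0 Z0 hx hy H.
apply/eqP; apply/negPn/negP => hne.
have c : ((m%:R : rat) * z1 - n1%:R) != 0.
  apply: contra hne; rewrite subr_eq0 => /eqP <-.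
  by rewrite mulrAC divff // mul1r.
have eMZ : (m%:R : rat)%:P * (z0%:P + z1 *: 'X) - ((n0%:R : rat)%:P + (n1%:R : rat) *: 'X)
   = ((m%:R : rat) * z0 - n0%:R)%:P + ((m%:R : rat) * z1 - n1%:R) *: 'X.
  rewrite -!mul_polyC !polyCB !polyCM; ring.
rewrite eMZ in E2.
have sL := @size_lin ((m%:R : rat) * z0 - n0%:R) _ c.
have L0 : ((m%:R : rat) * z0 - n0%:R)%:P + ((m%:R : rat) * z1 - n1%:R) *: 'X != 0.
  by rewrite -size_poly_eq0 sL.
have sxy : size (x * y) = (size x + size y).-1 by rewrite size_mul.
have xy0 : x * y != 0 by rewrite mulf_neq0.
have sLL := size_mul L0 xy0.
rewrite E2 sL sxy in sLL.
have h1 := size_mul_leq ((n0%:R : rat)%:P + (n1%:R : rat) *: 'X) (z0%:P + z1 *: 'X).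
rewrite sN sZ in h1.
have h2 := size_add x y.
have h3 := size_mul_leq (((n0%:R : rat)%:P + (n1%:R : rat) *: 'X) * (z0%:P + z1 *: 'X)) (x + y).
rewrite -subn1 in h3.
move: sx sy h1 h2 h3 sLL.
case: (size x) => [|a] //; case: (size y) => [|b] //=.
move=> ha hb h1 h2 h3 sLL.
have h4 := leq_trans h3 (leq_sub2r 1 (leq_add h1 h2)).
rewrite sLL in h4.
lia.
Qed.
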